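(* Let $1\le k<n$ and let $X$ be a fixed real $n\times k$ matrix of full column rank $k$. Let $\mathbf{F}_2^0$ be the class of all distributions $F$ of $Y=X\beta+e$ in $\mathbb{R}^n$, where $\beta$ ranges over $\mathbb{R}^k$ and the distribution of $e$ ranges over all distributions on $\mathbb{R}^n$ with $Ee=0$ and $Eee'=\sigma^2 I_n$ for some $0<\sigma^2<\infty$; write $\beta(F)$ for the corresponding $\beta$ and $e=Y-X\beta(F)$ for the error vector under $F$. Let $\hat\beta_{OLS}=(X'X)^{-1}X'Y$, let $H_1,\dots,H_k$ be symmetric real $n\times n$ matrices with $\operatorname{tr}(H_i)=0$ and $X'H_iX=0$ for $i=1,\dots,k$, and for $\alpha\in\mathbb{R}$ define $$\hat\beta_\alpha=\hat\beta_{OLS}+\alpha\,(Y'H_1Y,\dots,Y'H_kY)'.$$ Write $Q=(Y'H_1Y,\dots,Y'H_kY)'$. Then: (a) $E_F(\hat\beta_\alpha)=\beta(F)$ for all $F\in\mathbf{F}_2^0$ and all $\alpha\in\mathbb{R}$. (b) If $\operatorname{Cov}_F(c'\hat\beta_{OLS},c'Q)\neq 0$ for some $c\in\mathbb{R}^k$ and some $F\in\mathbf{F}_2^0$ under which $Y$ has finite fourth moments, then there exists $\alpha\in\mathbb{R}$ such that $\operatorname{Var}_F(c'\hat\beta_\alpha)<\operatorname{Var}_F(c'\hat\beta_{OLS})$. (c) For every $c\in\mathbb{R}^k$ and every $F\in\mathbf{F}_2^0$ with finite fourth moments and $\beta(F)=0$, $$\operatorname{Cov}_F(c'\hat\beta_{OLS},c'Q)=\sum_{j=1}^n\sum_{l=1}^n\sum_{m=1}^n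 d_j\Big(\sum_{i=1}^k c_i h_{lm}(i)\Big)E_F(e_je_le_m),$$ where $d=(d_1,\dots,d_n)'=X(X'X)^{-1}c$ and $h_{lm}(i)$ is the $(l,m)$-th entry of $H_i$. (d) For every $c\in\mathbb{R}^k$ and every $F\in\mathbf{F}_2^0$ with finite fourth moments under which $\beta(F)=0$ and the coordinates $e_1,\dots,e_n$ of $e$ are independent, $$\operatorname{Cov}_F(c'\hat\beta_{OLS},c'Q)=\sum_{j=1}^n d_j\Big(\sum_{i=1}^k c_i h_{jj}(i)\Big)E_F(e_j^3),$$ with $d$ and $h_{jj}(i)$ as in (c).
   Context: $E_F$, $\operatorname{Var}_F$, $\operatorname{Cov}_F$ denote expectation, variance and covariance when $Y$ has distribution $F$. *)

(* Defs.v *)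
From HB Require Import structures.
From mathcomp Require Import all_boot all_order all_algebra.
From mathcomp Require Import all_classical all_reals all_analysis.
Set Implicit Arguments.
Unset Strict Implicit.
Unset Printing Implicit Defensive.
Import Order.TTheory GRing.Theory Num.Theory.
Local Open Scope classical_set_scope.
Local Open Scope ring_scope.

(* A distribution F in F_2^0 is represented by a probability space (T,P),
   a parameter beta(F) : 'cV_k and an error vector e = (e_1,...,e_n) of
   real random variables; then Y = X beta + e. *)
Section Model.
Context {R : realType} {n k : nat} (X : 'M[R]_(n, k)) (H : 'I_k -> 'M[R]_n).
Context {d : measure_display} {T : measurableType d} (P : probability T R).
Context (beta : 'cV[R]_k) (e : 'I_n -> T -> R).

Definition errvec (t : T) : 'cV[R]_n := \col_i e i t.

Definition Yobs (t : T) : 'cV[R]_n := X *m beta + errvec t.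

(* e has a distribution with E e = 0 and E e e' = sigma^2 I_n, 0 < sigma^2
   (finite second moments; measurability is part of membership in Lfun). *)
Definition in_F20 : Prop :=
  [/\ (forall i, e i \in Lfun P 2%:E),
      (forall i, ('E_P[e i] = 0)%E) &
      exists sigma2 : R, 0 < sigma2 /\
        forall i j, ('E_P[fun t => (e i t * e j t)%R] =
                    (if i == j then sigma2 else 0)%:E)%E].

Definition fourth_moments : Prop :=
  forall i, (fun t => Yobs t i 0) \in Lfun P 4%:E.

Definition betaOLS (t : T) : 'cV[R]_k := invmx (X^T *m X) *m X^T *m Yobs t.

Definition Qvec (t : T) : 'cV[R]_k := \col_i ((Yobs t)^T *m H i *m Yobs t) 0 0.

Definition betaAlpha (a : R) (t : T) : 'cV[R]_k := betaOLS t + a *: Qvec t.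

End Model.

Definition lincomb {R : realType} {k : nat} (c v : 'cV[R]_k) : R := (c^T *m v) 0 0.

Definition mutually_independent {R : realType} {d : measure_display}
  {T : measurableType d} (P : probability T R) {n : nat} (f : 'I_n -> T -> R) : Prop :=
  forall B : 'I_n -> set R, (forall i, measurable (B i)) ->
    P (\bigcap_(i in [set: 'I_n]) (f i @^-1` B i)) =
    (\prod_(i < n) P (f i @^-1` B i))%E.

(* Main.v *)
Require Import Defs.
From HB Require Import structures.
From mathcomp Require Import all_boot all_order all_algebra.
From mathcomp Require Import all_classical all_reals all_analysis.
From mathcomp Require Import measurable_realfun measurable_fun_approximation.
From mathcomp Require Import ring lra.
Import Order.TTheory GRing.Theory Num.Theory.
Import numFieldNormedType.Exports.
Local Open Scope classical_set_scope.
Local Open Scope ring_scope.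


Section toolkit.
Context {d : measure_display} {T : measurableType d} {R : realType}
  (P : probability T R).

Lemma LfunD p (p1 : (1 <= p)%E) (f g : T -> R) :
  f \in Lfun P p -> g \in Lfun P p -> (fun t => f t + g t) \in Lfun P p.
Proof. by move=> hf hg; have h := rpredD hf hg; exact: h p1. Qed.

Lemma LfunZ p (p1 : (1 <= p)%E) (a : R) (f : T -> R) :
  f \in Lfun P p -> (fun t => a * f t) \in Lfun P p.
Proof. by move=> hf; have h := rpredZ a hf; exact: h p1. Qed.

Lemma Lfun0 p (p1 : (1 <= p)%E) : (fun _ : T => (0:R)) \in Lfun P p.
Proof. by have h := @rpred0 _ (@Lfun _ T R P p); exact: h p1. Qed.

Lemma Lfun_sum p (p1 : (1 <= p)%E) (I : Type) (r : seq I) (F : I -> T -> R) :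
  (forall i, F i \in Lfun P p) -> (fun t => \sum_(i <- r) F i t) \in Lfun P p.
Proof.
move=> hF; elim: r => [|a r IH].
  under eq_fun do rewrite big_nil; exact: Lfun0.
under eq_fun do rewrite big_cons; exact: LfunD.
Qed.

Lemma Lfun_ext {p} (f g : T -> R) : f =1 g -> f \in Lfun P p -> g \in Lfun P p.
Proof. by move=> /funext ->. Qed.

Lemma Lfun_meas {p} {f : T -> R} : f \in Lfun P p -> measurable_fun setT f.
Proof. by case/andP; rewrite inE. Qed.

Lemma L1_le (f g : T -> R) : measurable_fun setT f ->
  (forall t, `|f t| <= g t) -> g \in Lfun P 1 -> f \in Lfun P 1.
Proof.
move=> mf fg /Lfun1_integrable ig; apply/Lfun1_integrable.
apply: (le_integrable _ _ _ ig) => //.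
  exact/measurable_EFinP.
move=> t _ /=; rewrite lee_fin (le_trans (fg t))//.
exact: ler_norm.
Qed.

Lemma L4_pow4 (f : T -> R) : f \in Lfun P 4%:E -> (fun t => f t ^+ 4) \in Lfun P 1.
Proof.
move=> hf; have := Lfun_integrable _ hf; rewrite ler1n => /(_ isT) h.
apply/Lfun1_integrable.
move: h; apply: eq_integrable => // t _ /=.
by rewrite powR_mulrn// -normrX ger0_norm// exprn_even_ge0.
Qed.

Lemma L2_sqr (f : T -> R) : measurable_fun setT f ->
  (fun t => f t ^+ 2) \in Lfun P 1 -> f \in Lfun P 2%:E.
Proof.
move=> mf /Lfun1_integrable /integrableP[_ h].
rewrite inE; apply/andP; split; first by rewrite inE.
rewrite inE /finite_norm unlock /=.
apply: poweR_lty.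
apply: le_lt_trans h; rewrite le_eqVlt; apply/orP; left; apply/eqP.
apply: eq_integral => t _ /=.
by rewrite powR_mulrn// normrX.
Qed.

Lemma L4_L2 (f : T -> R) : f \in Lfun P 4%:E -> f \in Lfun P 2%:E.
Proof.
apply: Lfun_subset => //.
- by rewrite lee1n.
- by rewrite lee1n.
- exact: fin_num_measure.
- by rewrite lee_fin ler_nat.
Qed.

Lemma L2_L1 (f : T -> R) : f \in Lfun P 2%:E -> f \in Lfun P 1.
Proof. by apply: Lfun_subset12; exact: fin_num_measure. Qed.

Lemma L4_mul (f g : T -> R) : f \in Lfun P 4%:E -> g \in Lfun P 4%:E ->
  (fun t => f t * g t) \in Lfun P 2%:E.
Proof.
move=> hf hg; have mf := Lfun_meas hf; have mg := Lfun_meas hg.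
apply: L2_sqr; first exact: measurable_funM.
apply: (@L1_le _ (fun t => f t ^+ 4 + g t ^+ 4)).
- by apply: measurable_funX; exact: measurable_funM.
- move=> t; rewrite ger0_norm ?sqr_ge0//.
  set a := f t; set b := g t.
  nra.
- by apply: LfunD => //; exact: L4_pow4.
Qed.

Lemma L4_mul3 (f g h : T -> R) : f \in Lfun P 4%:E -> g \in Lfun P 4%:E ->
  h \in Lfun P 4%:E -> (fun t => f t * g t * h t) \in Lfun P 1.
Proof.
move=> hf hg hh; have mf := Lfun_meas hf; have mg := Lfun_meas hg.
have mh := Lfun_meas hh.
apply: (@L1_le _ (fun t => (f t ^+ 4 + g t ^+ 4) + (1 + h t ^+ 4))).
- by apply: measurable_funM => //; exact: measurable_funM.
- move=> t; set a := f t; set b := g t; set c := h t.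
  rewrite normrM.
  have x0 : 0 <= `|a * b| by [].
  have y0 : 0 <= `|c| by [].
  have hx : `|a * b| ^+ 2 = (a * b) ^+ 2 by rewrite real_normK ?num_real.
  have hy : `|c| ^+ 2 = c ^+ 2 by rewrite real_normK ?num_real.
  set x := `|a * b| in x0 hx *; set y := `|c| in y0 hy *.
  have h1 : 0 <= (x - y) ^+ 2 by exact: sqr_ge0.
  have h2 : 0 <= (c ^+ 2 - 1) ^+ 2 by exact: sqr_ge0.
  have h3 : 0 <= (a ^+ 2 - b ^+ 2) ^+ 2 by exact: sqr_ge0.
  have h4 : 0 <= a ^+ 4 by rewrite exprn_even_ge0.
  have h5 : 0 <= b ^+ 4 by rewrite exprn_even_ge0.
  have h6 : 0 <= c ^+ 4 by rewrite exprn_even_ge0.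
  have e4 : forall z : R, z ^+ 4 = (z ^+ 2) ^+ 2 by move=> z; rewrite -exprM.
  rewrite !e4 in h4 h5 h6 *.
  move: h1 h2 h3; rewrite !sqrrB exprMn hx hy.
  nra.
- apply: LfunD => //; apply: LfunD => //; try exact: L4_pow4.
  exact: Lfun_cst.
Qed.


Definition Ex (f : T -> R) : R := fine ('E_P[f])%E.

Lemma ExE {f : T -> R} : f \in Lfun P 1 -> ('E_P[f] = (Ex f)%:E)%E.
Proof. by move=> hf; rewrite fineK// expectation_fin_num. Qed.

Lemma Ex_ext (f g : T -> R) : f =1 g -> Ex f = Ex g.
Proof. by move=> /funext ->. Qed.

Lemma ExD (f g : T -> R) : f \in Lfun P 1 -> g \in Lfun P 1 ->
  Ex (fun t => f t + g t) = Ex f + Ex g.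
Proof.
move=> hf hg; rewrite {1}/Ex.
have -> : (fun t => f t + g t) = (f \+ g)%R by [].
by rewrite expectationD// (ExE hf) (ExE hg).
Qed.

Lemma ExZ (a : R) (f : T -> R) : f \in Lfun P 1 ->
  Ex (fun t => a * f t) = a * Ex f.
Proof.
move=> hf; rewrite {1}/Ex.
have -> : (fun t => a * f t) = (a \o* f)%R.
  by apply/funext => t /=; rewrite mulrC.
by rewrite expectationZl// (ExE hf).
Qed.

Lemma Ex_cst (c : R) : Ex (fun _ => c) = c.
Proof. by rewrite /Ex -[fun _ => c]/(cst c) expectation_cst. Qed.

Lemma Ex_sum (I : Type) (r : seq I) (F : I -> T -> R) :
  (forall i, F i \in Lfun P 1) ->
  Ex (fun t => \sum_(i <- r) F i t) = \sum_(i <- r) Ex (F i).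
Proof.
move=> hF; elim: r => [|a r IH].
  by under eq_fun do rewrite big_nil; rewrite big_nil Ex_cst.
under eq_fun do rewrite big_cons; rewrite big_cons ExD ?IH//.
exact: Lfun_sum.
Qed.


Lemma L1_of_ge0 (f : T -> R) (x : R) : measurable_fun setT f ->
  (forall t, 0 <= f t) -> ('E_P[f] = x%:E)%E -> f \in Lfun P 1.
Proof.
move=> mf f0 hE; apply/Lfun1_integrable/integrableP; split.
  exact/measurable_EFinP.
have -> : (\int[P]_t `|(EFin \o f) t|)%E = ('E_P[f])%E.
  rewrite unlock; apply: eq_integral => t _ /=.
  by rewrite ger0_norm.
by rewrite hE ltry.
Qed.

Lemma Ex_sum2 (I J : Type) (r1 : seq I) (r2 : seq J) (F : I -> J -> T -> R) :
  (forall i j, F i j \in Lfun P 1) ->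
  Ex (fun t => \sum_(i <- r1) \sum_(j <- r2) F i j t) =
  \sum_(i <- r1) \sum_(j <- r2) Ex (F i j).
Proof.
move=> hF; rewrite Ex_sum; last by move=> i; exact: Lfun_sum.
by apply: eq_bigr => i _; rewrite Ex_sum.
Qed.

Lemma Ex_sum3 (I J K : Type) (r1 : seq I) (r2 : seq J) (r3 : seq K)
  (F : I -> J -> K -> T -> R) :
  (forall i j k, F i j k \in Lfun P 1) ->
  Ex (fun t => \sum_(i <- r1) \sum_(j <- r2) \sum_(k <- r3) F i j k t) =
  \sum_(i <- r1) \sum_(j <- r2) \sum_(k <- r3) Ex (F i j k).
Proof.
move=> hF; rewrite Ex_sum2; last by move=> i j; exact: Lfun_sum.
by apply: eq_bigr => i _; apply: eq_bigr => j _; rewrite Ex_sum.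
Qed.

Lemma mct_helper (h : nat -> T -> R) (f : T -> R) :
  (forall N, measurable_fun setT (h N)) -> (forall N t, 0 <= h N t) ->
  (forall t, {homo (fun N => h N t) : m N / (m <= N)%N >-> m <= N}) ->
  (forall t, (fun N => h N t) @ \oo --> f t) ->
  ('E_P[h N] @[N --> \oo] --> 'E_P[f])%E.
Proof.
move=> mh h0 nd cv.
have := @cvg_monotone_convergence _ _ _ P setT measurableT (fun N t => (h N t)%:E).
have -> : (fun x => limn (fun N => (h N x)%:E)) = (fun x => (f x)%:E).
  apply/funext => x; apply: cvg_lim => //.
  by apply/fine_cvgP; split; [exact: nearW | exact: cv].
rewrite unlock; apply.
- by move=> N; exact/measurable_EFinP.
- by move=> N x _; rewrite lee_fin.
- by move=> x _ m N mN; rewrite lee_fin; exact: nd.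
Qed.

End toolkit.


Section approx_facts.
Context {R : realType} (phi : R -> R) (mphi : measurable_fun setT phi)
  (phi0 : forall y, 0 <= phi y).

Definition ap (N : nat) : R -> R := approx setT (EFin \o phi) N.
Definition apK (N : nat) := (N * 2 ^ N)%N.
Definition apc (N : nat) (k : 'I_(apK N).+1) : R :=
  if (k < apK N)%N then k%:R * 2 ^- N else N%:R.
Definition apS (N : nat) (k : 'I_(apK N).+1) : set R :=
  if (k < apK N)%N then dyadic_approx setT (EFin \o phi) N k
  else integer_approx setT (EFin \o phi) N.

Lemma mphiE : measurable_fun setT (EFin \o phi).
Proof. exact/measurable_EFinP. Qed.

Lemma apS_measurable N k : measurable (apS N k).
Proof.
rewrite /apS; case: ifPn => _.
  rewrite /dyadic_approx; case: ifPn => [kn|_]//; rewrite -preimage_comp.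
  apply: mphiE => //; apply/measurable_image_EFin; exact: measurable_itv.
exact: emeasurable_fun_c_infty mphiE _.
Qed.

Lemma apE N y : ap N y = \sum_(k < (apK N).+1) apc N k * \1_(apS N k) y.
Proof.
rewrite big_ord_recr /= /ap /approx /apc /apS /= ltnn; congr (_ + _).
by apply: eq_bigr => k _; rewrite /= ltn_ord.
Qed.

Lemma ap_ge0 N y : 0 <= ap N y.
Proof.
rewrite apE; apply: sumr_ge0 => k _; apply: mulr_ge0.
  by rewrite /apc; case: ifPn => _ //; apply: mulr_ge0 => //; exact: ltW.
by rewrite indicE.
Qed.

Lemma ap_nd y : {homo (fun N => ap N y) : m N / (m <= N)%N >-> m <= N}.
Proof. by move=> m N mN; exact/lefP/nd_approx. Qed.

Lemma ap_cvg y : (fun N => ap N y) @ \oo --> phi y.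
Proof.
have := @cvg_approx _ _ _ setT (EFin \o phi) y (fun x _ => phi0 x) Logic.I (ltry _).
by [].
Qed.

Lemma ap_meas N : measurable_fun setT (ap N).
Proof.
rewrite (_ : ap N = fun y => \sum_k apc N k * \1_(apS N k) y).
  apply: measurable_sum => k; apply: measurable_funM => //.
  apply: measurable_indic; exact: apS_measurable.
by apply/funext => y; rewrite apE.
Qed.

End approx_facts.

Lemma cvg_bigprod {R : realType} (I : Type) (r : seq I) (u : I -> nat -> R) (l : I -> R) :
  (forall i, u i @ \oo --> l i) ->
  (fun N => \prod_(i <- r) u i N) @ \oo --> \prod_(i <- r) l i.
Proof.
move=> hu; elim: r => [|a r IH].
  under eq_fun do rewrite big_nil; rewrite big_nil; exact: cvg_cst.
under eq_fun do rewrite big_cons; rewrite big_cons.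
exact: cvgM.
Qed.

Lemma pow_le4 {R : realType} (y : R) k : (k <= 4)%N -> `|y ^+ k| <= 1 + y ^+ 4.
Proof.
move=> hk; rewrite normrX.
have y4 : y ^+ 4 = `|y| ^+ 4.
  by rewrite -normrX ger0_norm// exprn_even_ge0.
have [y1|y1] := leP `|y| 1.
  rewrite (le_trans (exprn_ile1 _ _ y1))// lerDl y4 exprn_ge0//.
have h : `|y| ^+ k <= `|y| ^+ 4.
  by rewrite -(subnK hk) exprD ler_peMl ?exprn_ge0 ?exprn_ege1 // ltW.
rewrite y4; lra.
Qed.

Section indep.
Context {d : measure_display} {T : measurableType d} {R : realType}
  (P : probability T R) {n : nat} (e : 'I_n -> T -> R)
  (hind : mutually_independent P e)
  (me : forall i, measurable_fun setT (e i)).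

Lemma Lfun_indic (A : set T) : measurable A -> (fun t => \1_A t : R) \in Lfun P 1.
Proof. by move=> mA; apply/Lfun1_integrable; exact: integrable_indic. Qed.

Lemma Ex_indic (A : set T) : measurable A -> Ex P (fun t => \1_A t) = fine (P A).
Proof. by move=> mA; rewrite /Ex -[fun t => _]/(\1_A : T -> R) expectation_indic. Qed.

Lemma prod_indic (A : 'I_n -> set R) (t : T) :
  \prod_i (\1_(A i) (e i t) : R) = \1_(\bigcap_(i in [set: 'I_n]) (e i @^-1` A i)) t.
Proof.
have [allin|notall] := pselect (forall i, A i (e i t)).
  rewrite indicE mem_set; last by move=> i _; exact: allin.
  by rewrite big1// => i _; rewrite indicE mem_set.
have [i0 ni0] : exists i0, ~ A i0 (e i0 t).
  by apply/existsNP.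
rewrite (bigD1 i0)//= indicE memNset// mul0r indicE memNset//.
by move=> h; apply: ni0; exact: h.
Qed.

Lemma indep_simple (K : nat) (c : 'I_n -> 'I_K -> R) (S : 'I_n -> 'I_K -> set R)
  (mS : forall i k, measurable (S i k)) :
  (fun t => \prod_i \sum_k c i k * \1_(S i k) (e i t)) \in Lfun P 1 /\
  Ex P (fun t => \prod_i \sum_k c i k * \1_(S i k) (e i t)) =
  \prod_i \sum_k c i k * fine (P (e i @^-1` S i k)).
Proof.
pose A (f : {ffun 'I_n -> 'I_K}) := \bigcap_(i in [set: 'I_n]) (e i @^-1` S i (f i)).
have mA f : measurable (A f).
  apply: fin_bigcap_measurable => // i _.
  by rewrite -[_ @^-1` _]setTI; apply: me.
have E t : \prod_i \sum_k c i k * \1_(S i k) (e i t) =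
    \sum_(f : {ffun 'I_n -> 'I_K}) (\prod_i c i (f i)) * \1_(A f) t.
  rewrite bigA_distr_bigA; apply: eq_bigr => f _.
  by rewrite big_split /= prod_indic.
have L1 (f : {ffun 'I_n -> 'I_K}) : (fun t => (\prod_i c i (f i)) * \1_(A f) t) \in Lfun P 1.
  by apply: LfunZ => //; exact: Lfun_indic.
have -> : (fun t => \prod_i \sum_k c i k * \1_(S i k) (e i t)) =
    (fun t => \sum_(f <- index_enum {ffun 'I_n -> 'I_K}) (\prod_i c i (f i)) * \1_(A f) t).
  by apply/funext => t; rewrite E.
split; first exact: Lfun_sum.
rewrite Ex_sum// bigA_distr_bigA; apply: eq_bigr => f _.
rewrite ExZ ?Lfun_indic// Ex_indic// hind; last first.
  by move=> i; exact: mS.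
have -> : (\prod_(i < n) P (e i @^-1` S i (f i)) =
    (\prod_(i < n) fine (P (e i @^-1` S i (f i))))%:E)%E.
  rewrite -prodEFin; apply: eq_bigr => i _; rewrite fineK//.
  by apply: fin_num_measure; rewrite -[_ @^-1` _]setTI; exact: me.
by rewrite /= big_split.
Qed.


Lemma indic_pre (S : set R) (f : T -> R) t : \1_S (f t) = \1_(f @^-1` S) t :> R.
Proof. by rewrite !indicE. Qed.

Lemma single_simple (i : 'I_n) (K : nat) (c : 'I_K -> R) (S : 'I_K -> set R)
  (mS : forall k, measurable (S k)) :
  (fun t => \sum_k c k * \1_(S k) (e i t)) \in Lfun P 1 /\
  Ex P (fun t => \sum_k c k * \1_(S k) (e i t)) =
  \sum_k c k * fine (P (e i @^-1` S k)).
Proof.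
have mpre k : measurable (e i @^-1` S k).
  by rewrite -[_ @^-1` _]setTI; apply: me.
under eq_fun do under eq_bigr do rewrite indic_pre.
have L k : (fun t => c k * \1_(e i @^-1` S k) t) \in Lfun P 1.
  by apply: LfunZ => //; exact: Lfun_indic.
split; first exact: Lfun_sum.
rewrite Ex_sum//; apply: eq_bigr => k _.
by rewrite ExZ ?Lfun_indic// Ex_indic.
Qed.

Lemma indep_ge0 (phi : 'I_n -> R -> R)
  (mphi : forall i, measurable_fun setT (phi i))
  (phi0 : forall i y, 0 <= phi i y)
  (hint : forall i, (fun t => phi i (e i t)) \in Lfun P 1) :
  ('E_P[fun t => (\prod_i phi i (e i t))%R] =
   (\prod_i Ex P (fun t => phi i (e i t)))%:E)%E.
Proof.
pose g N t := \prod_i ap (phi i) N (e i t).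
have gE N : g N = fun t => \prod_i \sum_k apc N k * \1_(apS (phi i) N k) (e i t).
  by apply/funext => t; apply: eq_bigr => i _; rewrite apE.
have hsimple N := indep_simple _ (fun=> apc N) (fun i => apS (phi i) N)
  (fun i k => @apS_measurable _ (phi i) (mphi i) N k).
have hsing i N := single_simple i _ (apc N) (apS (phi i) N) (@apS_measurable _ (phi i) (mphi i) N).
have apiE i N : (fun t => ap (phi i) N (e i t)) =
    (fun t => \sum_k apc N k * \1_(apS (phi i) N k) (e i t)).
  by apply/funext => t; rewrite apE.
have gL1 N : g N \in Lfun P 1 by rewrite gE; exact: (hsimple N).1.
have apL1 i N : (fun t => ap (phi i) N (e i t)) \in Lfun P 1.
  by rewrite apiE; exact: (hsing i N).1.
have ExgE N : Ex P (g N) = \prod_i Ex P (fun t => ap (phi i) N (e i t)).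
  rewrite gE (hsimple N).2; apply: eq_bigr => i _.
  by rewrite apiE (hsing i N).2.
have mct1 i : (fun N => Ex P (fun t => ap (phi i) N (e i t))) @ \oo -->
    Ex P (fun t => phi i (e i t)).
  have := @mct_helper _ _ _ P (fun N t => ap (phi i) N (e i t))
    (fun t => phi i (e i t)).
  rewrite (ExE P (hint i)).
  move=> /(_ _ _ _ _)/fine_cvgP[]; last by move=> _ h; exact: h.
  - by move=> N; apply: measurableT_comp => //; exact: ap_meas.
  - by move=> N t; exact: ap_ge0.
  - by move=> t; exact: ap_nd.
  - by move=> t; exact: ap_cvg.
have mct2 : ('E_P[g N] @[N --> \oo] --> 'E_P[fun t => (\prod_i phi i (e i t))%R])%E.
  apply: mct_helper.
  - move=> N. have hh := Lfun_meas P (gL1 N). exact hh.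
  - by move=> N t; apply: prodr_ge0 => i _; exact: ap_ge0.
  - move=> t m N mN; apply: ler_prod => i _.
    by rewrite ap_ge0 /=; exact: ap_nd.
  - by move=> t; apply: cvg_bigprod => i; exact: ap_cvg.
have mct3 : ('E_P[g N] @[N --> \oo] --> (\prod_i Ex P (fun t => phi i (e i t)))%:E)%E.
  under eq_fun do rewrite (ExE P (gL1 _)) ExgE.
  apply/fine_cvgP; split; first exact: nearW.
  exact: cvg_bigprod.
exact: (cvg_unique _ mct2 mct3).
Qed.


Lemma indep_prod (phi : 'I_n -> R -> R)
  (mphi : forall i, measurable_fun setT (phi i))
  (hint : forall i, (fun t => phi i (e i t)) \in Lfun P 1) :
  (fun t => \prod_i phi i (e i t)) \in Lfun P 1 /\
  Ex P (fun t => \prod_i phi i (e i t)) = \prod_i Ex P (fun t => phi i (e i t)).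
Proof.
pose pp i y := Num.max (phi i y) 0.
pose qq i y := Num.max (- phi i y) 0.
pose r (j : bool) i := if j then pp i else qq i.
pose s (j : bool) : R := if j then 1 else -1.
have mr j i : measurable_fun setT (r j i).
  rewrite /r /pp /qq; case: j.
    exact: (measurable_maxr (mphi i) (measurable_cst _)).
  apply: (measurable_maxr _ (measurable_cst _)).
  exact: measurableT_comp (mphi i).
have r0 j i y : 0 <= r j i y by rewrite /r /pp /qq; case: j; rewrite le_max lexx orbT.
have rL1 j i : (fun t => r j i (e i t)) \in Lfun P 1.
  apply: (@L1_le _ _ _ _ _ (fun t => `|phi i (e i t)|)).
  - exact: measurableT_comp (mr j i) (me i).
  - move=> t; rewrite ger0_norm // /r /pp /qq; case: j; rewrite ge_max normr_ge0 andbT.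
      exact: ler_norm.
    by rewrite -normrN ler_norm.
  - exact: (Lfun_norm (hint i)).
have phiE i y : phi i y = \sum_(j : bool) s j * r j i y.
  rewrite big_bool /s /r /pp /qq mul1r mulN1r.
  have [h|h] := leP 0 (phi i y).
    by rewrite /= (max_idPr _) ?subr0// oppr_le0.
  by rewrite /= (max_idPl _) ?opprK ?add0r// oppr_ge0 ltW.
have prodE t : \prod_i phi i (e i t) =
    \sum_(b : {ffun 'I_n -> bool}) (\prod_i s (b i)) * \prod_i r (b i) i (e i t).
  under eq_bigr do rewrite phiE.
  rewrite bigA_distr_bigA; apply: eq_bigr => b _.
  by rewrite -big_split.
have bL1 b : (fun t => \prod_i r (b i) i (e i t)) \in Lfun P 1.
  apply: (@L1_of_ge0 _ _ _ _ _ (\prod_i Ex P (fun t => r (b i) i (e i t)))).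
  - apply: (measurable_prod (h := fun i t => r (b i) i (e i t))) => i _.
    exact: measurableT_comp (mr _ i) (me i).
  - by move=> t; apply: prodr_ge0 => i _.
  - exact: (indep_ge0 (fun i => r (b i) i) (fun i => mr _ i) (fun i => r0 _ i) (fun i => rL1 _ i)).
have bE b : Ex P (fun t => \prod_i r (b i) i (e i t)) =
    \prod_i Ex P (fun t => r (b i) i (e i t)).
  by rewrite /Ex (indep_ge0 (fun i => r (b i) i) (fun i => mr _ i) (fun i => r0 _ i) (fun i => rL1 _ i)).
have -> : (fun t => \prod_i phi i (e i t)) = (fun t =>
    \sum_(b <- index_enum {ffun 'I_n -> bool})
      (\prod_i s (b i)) * \prod_i r (b i) i (e i t)).
  by apply/funext => t; rewrite prodE.
have L b : (fun t => (\prod_i s (b i)) * \prod_i r (b i) i (e i t)) \in Lfun P 1.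
  exact: LfunZ.
split; first exact: Lfun_sum.
rewrite Ex_sum//.
have -> : \prod_i Ex P (fun t => phi i (e i t)) =
    \prod_i \sum_(j : bool) s j * Ex P (fun t => r j i (e i t)).
  apply: eq_bigr => i _; rewrite big_bool.
  have -> : (fun t => phi i (e i t)) =
      (fun t => s true * r true i (e i t) + s false * r false i (e i t)).
    by apply/funext => t; rewrite phiE big_bool.
  by rewrite ExD ?ExZ //; apply: LfunZ.
rewrite bigA_distr_bigA; apply: eq_bigr => b _.
by rewrite ExZ// bE -big_split.
Qed.


Lemma prod_pred1 (x : 'I_n -> R) (j : 'I_n) : \prod_i x i ^+ (i == j) = x j.
Proof.
rewrite (bigD1 j)//= eqxx expr1 big1 ?mulr1// => i /negPf ->.
by rewrite expr0.
Qed.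

Lemma indep_triple (hL4 : forall i, e i \in Lfun P 4%:E)
  (hmean : forall i, ('E_P[e i] = 0)%E) (j l m : 'I_n) :
  Ex P (fun t => e j t * e l t * e m t) =
  if (j == l) && (l == m) then Ex P (fun t => e j t ^+ 3) else 0.
Proof.
pose c i := ((i == j) + (i == l) + (i == m))%N.
have c3 i : (c i <= 4)%N by rewrite /c; case: (i == j); case: (i == l); case: (i == m).
have mphi i : measurable_fun setT (fun y : R => y ^+ c i) by exact: measurable_funX.
have hint i : (fun t => (fun y => y ^+ c i) (e i t)) \in Lfun P 1.
  apply: (@L1_le _ _ _ P _ (fun t => 1 + e i t ^+ 4)).
  - exact: measurable_funX.
  - by move=> t; exact: pow_le4.
  - apply: LfunD => //; first exact: Lfun_cst.
    exact: L4_pow4.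
have [L E] := indep_prod (fun i y => y ^+ c i) mphi hint.
have -> : (fun t => e j t * e l t * e m t) = (fun t => \prod_i e i t ^+ c i).
  apply/funext => t; rewrite /c.
  under eq_bigr do rewrite !exprD.
  by rewrite !big_split /= !prod_pred1.
rewrite E.
have Ex0 b : c b = 1%N -> \prod_i Ex P (fun t => e i t ^+ c i) = 0.
  move=> cb; rewrite (bigD1 b)//= cb.
  have -> : Ex P (fun t => e b t ^+ 1) = 0.
    rewrite (_ : (fun t => e b t ^+ 1) = e b); last by apply/funext => t; rewrite expr1.
    by rewrite /Ex hmean.
  by rewrite mul0r.
case: eqP => [jl|/eqP jl]; case: eqP => [lm|/eqP lm] /=.
- subst l m; rewrite (bigD1 j)//= big1 ?mulr1.
    by rewrite /c eqxx.
  move=> i /negPf ij; rewrite /c ij /=.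
  rewrite (_ : (fun t => e i t ^+ 0) = (fun _ => 1)); last by apply/funext => t; rewrite expr0.
  exact: Ex_cst.
- subst l; apply: (Ex0 m); move: lm; rewrite eq_sym => /negPf ml.
  by rewrite /c ml eqxx.
- subst m; apply: (Ex0 j).
  by rewrite /c eqxx (negPf jl).
- have [jm|/negPf jm] := eqVneq j m.
    subst m; apply: (Ex0 l); move: jl; rewrite eq_sym => /negPf lj.
    by rewrite /c lj eqxx.
  by apply: (Ex0 j); rewrite /c eqxx (negPf jl) jm.
Qed.
End indep.


Lemma quadE {R : realType} {n : nat} (v : 'cV[R]_n) (A : 'M[R]_n) :
  (v^T *m A *m v) 0 0 = \sum_l \sum_m A l m * (v l 0 * v m 0).
Proof.
rewrite mxE exchange_big /=; apply: eq_bigr => m _.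
rewrite mxE mulr_suml; apply: eq_bigr => l _.
by rewrite !mxE; ring.
Qed.

Lemma lincombE {R : realType} {k : nat} (c v : 'cV[R]_k) :
  lincomb c v = \sum_i c i 0 * v i 0.
Proof. by rewrite /lincomb mxE; apply: eq_bigr => i _; rewrite mxE. Qed.

Lemma XtX_unit {R : realType} {n k : nat} (X : 'M[R]_(n, k)) :
  \rank X = k -> X^T *m X \in unitmx.
Proof.
move=> rX; rewrite -row_free_unit; apply: inj_row_free => v hv.
have hfree : row_free X^T by rewrite /row_free mxrank_tr rX.
apply/eqP; rewrite -(mulmx_free_eq0 _ hfree); apply/eqP.
set w := v *m X^T.
have h0 : (w *m w^T) 0 0 = 0.
  by rewrite /w trmx_mul trmxK mulmxA -(mulmxA v) hv mul0mx mxE.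
apply/rowP => j; rewrite [in RHS]mxE.
have : \sum_i w 0 i ^+ 2 = 0.
  rewrite -[RHS]h0 [RHS]mxE; apply: eq_bigr => i _.
  by rewrite [w^T i 0]mxE expr2.
move/psumr_eq0P => /(_ (fun i _ => sqr_ge0 _)) /(_ j isT) /eqP.
by rewrite sqrf_eq0 => /eqP.
Qed.

Section model.
Context {R : realType} {n k : nat} (X : 'M[R]_(n, k)) (H : 'I_k -> 'M[R]_n).
Context {d : measure_display} {T : measurableType d} (P : probability T R).
Context (beta : 'cV[R]_k) (e : 'I_n -> T -> R).

Definition uu (l : 'I_n) : R := (X *m beta) l 0.
Definition Yf (l : 'I_n) (t : T) : R := Yobs X beta e t l 0.
Definition MM : 'M[R]_(k, n) := invmx (X^T *m X) *m X^T.

Lemma YfE l t : Yf l t = uu l + e l t.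
Proof. by rewrite /Yf /Yobs /errvec /uu mxE [in X in _ + X]mxE. Qed.

Lemma QE t i : Qvec X H beta e t i 0 =
  \sum_l \sum_m H i l m * (Yf l t * Yf m t).
Proof. by rewrite /Qvec mxE quadE. Qed.

Lemma OLSE t i : betaOLS X beta e t i 0 = \sum_j MM i j * Yf j t.
Proof. by rewrite /betaOLS mxE. Qed.

Lemma lincQ (c : 'cV[R]_k) t : lincomb c (Qvec X H beta e t) =
  \sum_l \sum_m (\sum_i c i 0 * H i l m) * (Yf l t * Yf m t).
Proof.
rewrite lincombE.
under eq_bigr do rewrite QE mulr_sumr.
rewrite exchange_big /=; apply: eq_bigr => l _.
under eq_bigr do rewrite mulr_sumr.
rewrite exchange_big /=; apply: eq_bigr => m _.
by rewrite mulr_suml; apply: eq_bigr => i _; rewrite mulrA.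
Qed.

Lemma lincOLS (c : 'cV[R]_k) t : lincomb c (betaOLS X beta e t) =
  \sum_j (X *m invmx (X^T *m X) *m c) j 0 * Yf j t.
Proof.
have -> : (X *m invmx (X^T *m X) *m c) = (c^T *m MM)^T.
  by rewrite /MM !trmx_mul trmxK trmx_inv trmx_mul !trmxK.
rewrite /lincomb /betaOLS -/MM mulmxA mxE.
by apply: eq_bigr => j _; rewrite [X in _ = X * _]mxE.
Qed.

Hypothesis hF : in_F20 P e.

Lemma eL2 i : e i \in Lfun P 2%:E.
Proof. by case: hF. Qed.

Lemma Ee0 i : Ex P (e i) = 0.
Proof. by case: hF => _ h _; rewrite /Ex h. Qed.

Lemma YfL2 l : Yf l \in Lfun P 2%:E.
Proof.
have -> : Yf l = (fun t => uu l + e l t) by apply/funext => t; rewrite YfE.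
by apply: LfunD; [rewrite lee1n| exact: Lfun_cst | exact: eL2].
Qed.

Lemma YYL1 l m : (fun t => Yf l t * Yf m t) \in Lfun P 1.
Proof. exact: Lfun2_mul_Lfun1 (YfL2 l) (YfL2 m). Qed.

Lemma QL1 i : (fun t => Qvec X H beta e t i 0) \in Lfun P 1.
Proof.
under eq_fun do rewrite QE.
apply: Lfun_sum => // l; apply: Lfun_sum => // m.
by apply: LfunZ => //; exact: YYL1.
Qed.

Lemma OLSL1 i : (fun t => betaOLS X beta e t i 0) \in Lfun P 1.
Proof.
under eq_fun do rewrite OLSE.
apply: Lfun_sum => // j; apply: LfunZ => //.
exact: L2_L1 (YfL2 j).
Qed.

Lemma YfE' l : Yf l = (fun t => uu l + e l t).
Proof. by apply/funext => t; rewrite YfE. Qed.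

Lemma eL1 l : e l \in Lfun P 1.
Proof. exact: L2_L1 (eL2 l). Qed.

Lemma ExY l : Ex P (Yf l) = uu l.
Proof.
rewrite YfE' ExD ?Ex_cst ?Ee0 ?addr0 //; first exact: Lfun_cst.
exact: eL1.
Qed.

Lemma eeL1 l m : (fun t => e l t * e m t) \in Lfun P 1.
Proof. exact: Lfun2_mul_Lfun1 (eL2 l) (eL2 m). Qed.

Lemma ExYY (s2 : R)
  (hs : forall i j, ('E_P[fun t => (e i t * e j t)%R] = (if i == j then s2 else 0)%:E)%E)
  l m : Ex P (fun t => Yf l t * Yf m t) = uu l * uu m + (if l == m then s2 else 0).
Proof.
have -> : (fun t => Yf l t * Yf m t) = (fun t =>
    uu l * uu m + (uu l * e m t + (uu m * e l t + e l t * e m t))).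
  by apply/funext => t; rewrite !YfE; ring.
have L1c : (fun _ : T => uu l * uu m) \in Lfun P 1 by exact: Lfun_cst.
have L1a : (fun t => uu l * e m t) \in Lfun P 1 by apply: LfunZ => //; exact: eL1.
have L1b : (fun t => uu m * e l t) \in Lfun P 1 by apply: LfunZ => //; exact: eL1.
rewrite ExD //; last by apply: LfunD => //; apply: LfunD => //; exact: eeL1.
rewrite ExD //; last by apply: LfunD => //; exact: eeL1.
rewrite ExD //; last exact: eeL1.
rewrite Ex_cst !ExZ ?eL1 // !Ee0 /Ex hs /=; ring.
Qed.

Lemma ExQ (s2 : R)
  (hs : forall i j, ('E_P[fun t => (e i t * e j t)%R] = (if i == j then s2 else 0)%:E)%E)
  (htr : forall i, \tr (H i) = 0) (hXHX : forall i, X^T *m H i *m X = 0) i :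
  Ex P (fun t => Qvec X H beta e t i 0) = 0.
Proof.
under [fun t => _]eq_fun do rewrite QE.
rewrite Ex_sum2; last by move=> l m; apply: LfunZ => //; exact: YYL1.
under eq_bigr do under eq_bigr do rewrite ExZ ?YYL1 // (ExYY _ hs) mulrDr.
under eq_bigr do rewrite big_split /=.
rewrite big_split /=.
have -> : \sum_l \sum_m H i l m * (uu l * uu m) = ((X *m beta)^T *m H i *m (X *m beta)) 0 0.
  by rewrite quadE.
rewrite trmx_mul !mulmxA -(mulmxA _ X^T) -(mulmxA _ (X^T *m H i)) hXHX.
rewrite mulmx0 mul0mx mxE add0r.
rewrite [RHS](_ : 0 = s2 * \tr (H i)); last by rewrite htr mulr0.
rewrite /mxtrace mulr_sumr; apply: eq_bigr => l _.
rewrite (bigD1 l) //= eqxx big1 ?addr0 => [|m /negPf]; first by rewrite mulrC.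
by rewrite eq_sym => ->; rewrite mulr0.
Qed.

Lemma ExOLS (hX : \rank X = k) i : Ex P (fun t => betaOLS X beta e t i 0) = beta i 0.
Proof.
under [fun t => _]eq_fun do rewrite OLSE.
rewrite Ex_sum; last by move=> j; apply: LfunZ => //; exact: L2_L1 (YfL2 j).
rewrite (eq_bigr (fun j => MM i j * uu j)); last first.
  by move=> j _; rewrite ExZ ?ExY //; exact: L2_L1 (YfL2 j).
have -> : \sum_j MM i j * uu j = (MM *m (X *m beta)) i 0.
  by rewrite mxE; apply: eq_bigr => j _.
by rewrite /MM -mulmxA (mulmxA X^T) mulmxA mulVmx ?mul1mx // XtX_unit.
Qed.

Lemma partA (hX : \rank X = k) (htr : forall i, \tr (H i) = 0)
  (hXHX : forall i, X^T *m H i *m X = 0) alpha i :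
  ('E_P[fun t => betaAlpha X H beta e alpha t i ord0] = (beta i ord0)%:E)%E.
Proof.
have [_ _ [s2 [_ hs]]] := hF.
have -> : (fun t => betaAlpha X H beta e alpha t i ord0) =
    (fun t => betaOLS X beta e t i 0 + alpha * Qvec X H beta e t i 0).
  by apply/funext => t; rewrite /betaAlpha !mxE.
rewrite ExE; last by apply: LfunD => //; [exact: OLSL1 | apply: LfunZ => //; exact: QL1].
rewrite ExD; [|exact: OLSL1|by apply: LfunZ => //; exact: QL1].
by rewrite ExZ ?QL1 // ExOLS // (ExQ _ hs) // mulr0 addr0.
Qed.

Hypothesis h4 : fourth_moments X P beta e.

Lemma YfL4 l : Yf l \in Lfun P 4%:E.
Proof. exact: h4. Qed.

Lemma XcL2 (c : 'cV[R]_k) : (fun t => lincomb c (betaOLS X beta e t)) \in Lfun P 2%:E.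
Proof.
under [fun t => _]eq_fun do rewrite lincOLS.
apply: Lfun_sum; first by rewrite lee1n.
by move=> j; apply: LfunZ; [rewrite lee1n | exact: YfL2].
Qed.

Lemma YcL2 (c : 'cV[R]_k) : (fun t => lincomb c (Qvec X H beta e t)) \in Lfun P 2%:E.
Proof.
under [fun t => _]eq_fun do rewrite lincQ.
apply: Lfun_sum => [|l]; first by rewrite lee1n.
apply: Lfun_sum => [|m]; first by rewrite lee1n.
apply: LfunZ; first by rewrite lee1n.
exact: L4_mul (YfL4 l) (YfL4 m).
Qed.

Lemma partB (c : 'cV[R]_k) :
  covariance P (fun t => lincomb c (betaOLS X beta e t))
               (fun t => lincomb c (Qvec X H beta e t)) != 0%E ->
  exists alpha : R,
    ('V_P[fun t => lincomb c (betaAlpha X H beta e alpha t)] <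
     'V_P[fun t => lincomb c (betaOLS X beta e t)])%E.
Proof.
set Xc := (fun t => lincomb c (betaOLS X beta e t)).
set Yc := (fun t => lincomb c (Qvec X H beta e t)).
move=> hcov.
have X2 := XcL2 c; have Y2 := YcL2 c.
have X1 := L2_L1 P _ X2; have Y1 := L2_L1 P _ Y2.
have XY1 : (Xc * Yc)%R \in Lfun P 1 by exact: Lfun2_mul_Lfun1.
have aE alpha : (fun t => lincomb c (betaAlpha X H beta e alpha t)) =
    (Xc \+ (alpha \o* Yc))%R.
  apply/funext => t; rewrite /betaAlpha /lincomb /Xc /Yc /=.
  by rewrite mulmxDr -scalemxAr [LHS]mxE [X in _ + X]mxE mulrC.
have vXf := variance_fin_num X2.
have vYf := variance_fin_num Y2.
have cf := covariance_fin_num X1 Y1 XY1.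
set vX := 'V_P[Xc] in vXf *.
set vY := 'V_P[Yc] in vYf *.
set cv := covariance P Xc Yc in cf hcov *.
have vY0 : (0 <= fine vY)%R by rewrite fine_ge0 // variance_ge0.
have cv0 : fine cv != 0.
  apply: contra hcov => /eqP h0; apply/eqP.
  by rewrite -(fineK cf) h0.
exists (- fine cv / (fine vY + 1)).
rewrite aE varianceD //; last by apply: Lfun_scale => //; rewrite ler1n.
rewrite varianceZ // covarianceZr // -/vX -/vY -/cv.
rewrite -(fineK vXf) -(fineK vYf) -(fineK cf) -!EFinM -!EFinD lte_fin.
set w := fine vY + 1.
have w0 : (0 < w)%R by rewrite /w; lra.
set a := fine cv; set v := fine vY; set x := fine vX.
have a2 : (0 < a ^+ 2)%R by rewrite exprn_even_gt0.
have hw : (w * w^-1 = 1)%R by rewrite mulfV // gt_eqF.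
have wi0 : (0 < w^-1)%R by rewrite invr_gt0.
have vw : (v = w - 1)%R by rewrite /w /v; ring.
rewrite vw.
rewrite /= mulNr.
have wn0 : w != 0 by rewrite gt_eqF.
set b := a / w.
have ab : a = b * w by rewrite /b divfK.
have b2 : (0 < b ^+ 2)%R.
  rewrite exprn_even_gt0 //; apply: contra cv0 => /eqP b0.
  by rewrite -/a ab b0 mul0r.
rewrite ab.
have : (0 < b ^+ 2 * w)%R by rewrite mulr_gt0.
rewrite !expr2 in b2 *; nra.
Qed.

Section beta0.
Hypothesis hb : beta = 0.

Lemma Yf0 l : Yf l = e l.
Proof. by apply/funext => t; rewrite YfE /uu hb mulmx0 mxE add0r. Qed.

Lemma eL4 l : e l \in Lfun P 4%:E.
Proof. by rewrite -Yf0; exact: YfL4. Qed.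

Lemma eee_L1 j l m : (fun t => e j t * e l t * e m t) \in Lfun P 1.
Proof. exact: L4_mul3 (eL4 j) (eL4 l) (eL4 m). Qed.

Lemma covE (c : 'cV[R]_k) :
  covariance P (fun t => lincomb c (betaOLS X beta e t))
               (fun t => lincomb c (Qvec X H beta e t)) =
  (\sum_(j < n) \sum_(l < n) \sum_(m < n)
     ((X *m invmx (X^T *m X) *m c) j 0 * (\sum_(i < k) c i 0 * H i l m)) *
      Ex P (fun t => e j t * e l t * e m t))%:E.
Proof.
set dv := X *m invmx (X^T *m X) *m c.
set g := fun l m => \sum_(i < k) c i 0 * H i l m.
set Xc := (fun t => lincomb c (betaOLS X beta e t)).
set Yc := (fun t => lincomb c (Qvec X H beta e t)).
have X2 : Xc \in Lfun P 2%:E := XcL2 c.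
have Y2 : Yc \in Lfun P 2%:E := YcL2 c.
have X1 : Xc \in Lfun P 1 := L2_L1 P _ X2.
have Y1 : Yc \in Lfun P 1 := L2_L1 P _ Y2.
have XY1 : (Xc * Yc)%R \in Lfun P 1 by exact: Lfun2_mul_Lfun1.
have XcE : Xc = (fun t => \sum_j dv j 0 * e j t).
  by apply/funext => t; rewrite /Xc lincOLS; apply: eq_bigr => j _; rewrite Yf0.
have YcE : Yc = (fun t => \sum_l \sum_m g l m * (e l t * e m t)).
  apply/funext => t; rewrite /Yc lincQ; apply: eq_bigr => l _.
  by apply: eq_bigr => m _; rewrite !Yf0.
have EX : ('E_P[Xc] = 0)%E.
  rewrite (ExE P X1) XcE Ex_sum; last by move=> j; apply: LfunZ => //; exact: eL1.
  by rewrite big1 // => j _; rewrite ExZ ?eL1 // Ee0 mulr0.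
rewrite covarianceE // EX mul0e sube0 (ExE P XY1).
congr EFin.
have -> : (Xc * Yc)%R = (fun t => \sum_j \sum_l \sum_m
    (dv j 0 * g l m) * (e j t * e l t * e m t)).
  apply/funext => t; rewrite (_ : (Xc * Yc)%R t = Xc t * Yc t) // XcE YcE /= mulr_suml; apply: eq_bigr => j _.
  rewrite mulr_sumr; apply: eq_bigr => l _.
  rewrite mulr_sumr; apply: eq_bigr => m _.
  ring.
rewrite Ex_sum3; last by move=> j l m; apply: LfunZ => //; exact: eee_L1.
apply: eq_bigr => j _; apply: eq_bigr => l _; apply: eq_bigr => m _.
by rewrite ExZ // eee_L1.
Qed.

Lemma RHSc (a : 'I_n -> 'I_n -> 'I_n -> R) :
  (\sum_(j < n) \sum_(l < n) \sum_(m < n)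
     ((a j l m)%:E * 'E_P[fun t => (e j t * e l t * e m t)%R]))%E =
  (\sum_(j < n) \sum_(l < n) \sum_(m < n)
     a j l m * Ex P (fun t => e j t * e l t * e m t))%:E.
Proof.
rewrite -sumEFin; apply: eq_bigr => j _; rewrite -sumEFin; apply: eq_bigr => l _.
rewrite -sumEFin; apply: eq_bigr => m _.
by rewrite (ExE P (eee_L1 j l m)).
Qed.

Lemma e3_L1 j : (fun t => e j t ^+ 3) \in Lfun P 1.
Proof.
apply: (@L1_le _ _ _ P _ (fun t => 1 + e j t ^+ 4)).
- exact/measurable_funX/(Lfun_meas P (eL2 j)).
- by move=> t; exact: pow_le4.
- apply: LfunD => //; first exact: Lfun_cst.
  exact: L4_pow4 (eL4 j).
Qed.

Lemma RHSd (a : 'I_n -> R) :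
  (\sum_(j < n) ((a j)%:E * 'E_P[fun t => (e j t ^+ 3)%R]))%E =
  (\sum_(j < n) a j * Ex P (fun t => e j t ^+ 3))%:E.
Proof.
rewrite -sumEFin; apply: eq_bigr => j _.
by rewrite (ExE P (e3_L1 j)).
Qed.

End beta0.

End model.

Lemma sum_diag3 {R : realType} {n : nat} (a : 'I_n -> 'I_n -> 'I_n -> R) (x : 'I_n -> R) :
  \sum_(j < n) \sum_(l < n) \sum_(m < n)
     a j l m * (if (j == l) && (l == m) then x j else 0) =
  \sum_(j < n) a j j j * x j.
Proof.
apply: eq_bigr => j _.
rewrite (bigD1 j) //= [X in _ + X]big1 ?addr0; last first.
  move=> l /negPf lj; rewrite big1 // => m _.
  by rewrite eq_sym lj /= mulr0.
rewrite (bigD1 j) //= eqxx /= [X in _ + X]big1 ?addr0 // => m /negPf mj.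
by rewrite eq_sym mj mulr0.
Qed.

Local Close Scope classical_set_scope.

Theorem lemmaA1 (R : realType) (n k : nat) (X : 'M[R]_(n, k))
    (H : 'I_k -> 'M[R]_n) :
  (1 <= k)%N -> (k < n)%N -> \rank X = k ->
  (forall i, (H i)^T = H i) ->
  (forall i, \tr (H i) = 0) ->
  (forall i, X^T *m H i *m X = 0) ->
  [/\
   (* (a) unbiasedness *)
   (forall (dd : measure_display) (T : measurableType dd)
      (P : probability T R) (beta : 'cV[R]_k) (e : 'I_n -> T -> R),
      in_F20 P e ->
      forall (alpha : R) (i : 'I_k),
        ('E_P[fun t => betaAlpha X H beta e alpha t i ord0] = (beta i ord0)%:E)%E),
   (* (b) variance reduction *)
   (forall (dd : measure_display) (T : measurableType dd)
      (P : probability T R) (beta : 'cV[R]_k) (e : 'I_n -> T -> R)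
      (c : 'cV[R]_k),
      in_F20 P e -> fourth_moments X P beta e ->
      covariance P (fun t => lincomb c (betaOLS X beta e t))
                   (fun t => lincomb c (Qvec X H beta e t)) != 0%E ->
      exists alpha : R,
        ('V_P[fun t => lincomb c (betaAlpha X H beta e alpha t)] <
         'V_P[fun t => lincomb c (betaOLS X beta e t)])%E),
   (* (c) covariance formula when beta(F) = 0 *)
   (forall (dd : measure_display) (T : measurableType dd)
      (P : probability T R) (beta : 'cV[R]_k) (e : 'I_n -> T -> R)
      (c : 'cV[R]_k),
      in_F20 P e -> fourth_moments X P beta e -> beta = 0 ->
      let dv := X *m invmx (X^T *m X) *m c in
      covariance P (fun t => lincomb c (betaOLS X beta e t))
                   (fun t => lincomb c (Qvec X H beta e t)) =
      (\sum_(j < n) \sum_(l < n) \sum_(m < n)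
         (((dv j 0 * (\sum_(i < k) c i 0 * H i l m))%R)%:E *
          'E_P[fun t => (e j t * e l t * e m t)%R]))%E) &
   (* (d) covariance formula with independent errors and beta(F) = 0 *)
   (forall (dd : measure_display) (T : measurableType dd)
      (P : probability T R) (beta : 'cV[R]_k) (e : 'I_n -> T -> R)
      (c : 'cV[R]_k),
      in_F20 P e -> fourth_moments X P beta e -> beta = 0 ->
      mutually_independent P e ->
      let dv := X *m invmx (X^T *m X) *m c in
      covariance P (fun t => lincomb c (betaOLS X beta e t))
                   (fun t => lincomb c (Qvec X H beta e t)) =
      (\sum_(j < n)
         (((dv j 0 * (\sum_(i < k) c i 0 * H i j j))%R)%:E *
          'E_P[fun t => (e j t ^+ 3)%R]))%E)].
Proof.
move=> hk hkn hX hHsym htr hXHX; split.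
- move=> dd T P beta e hF alpha i; exact: partA.
- move=> dd T P beta e c hF h4 hcov; exact: partB.
- move=> dd T P beta e c hF h4 hb dv.
  by rewrite (covE X H P beta e hF h4 hb) (RHSc X P beta e h4 hb).
- move=> dd T P beta e c hF h4 hb hind dv.
  rewrite (covE X H P beta e hF h4 hb) (RHSd X P beta e hF h4 hb); congr EFin.
  have me i : measurable_fun setT (e i).
    by have hh := Lfun_meas P (eL2 P e hF i); exact hh.
  have hmean i : ('E_P[e i] = 0)%E by case: hF.
  have hL4 i : e i \in Lfun P 4%:E by exact (eL4 X P beta e h4 hb i).
  rewrite -/dv.
  under eq_bigr do under eq_bigr do under eq_bigr do
    rewrite (indep_triple P e hind me hL4 hmean).
  by rewrite sum_diag3.
Qed.
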